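(* For all positive integers $k,\ell,n$ there exists a graph $G$ with pathwidth at most $k+1$ such that for every graph $H$ and every path $P$, if $G$ is isomorphic to a subgraph of $H\boxtimes P\boxtimes K_\ell$, then $P_n+K_k$ is isomorphic to a subgraph of $H$.
   Context: Graphs are finite and simple. $P_n$ is the path on $n$ vertices and $K_m$ the complete graph on $m$ vertices. The complete join $G+H$ is the disjoint union of $G$ and $H$ together with all edges between $V(G)$ and $V(H)$. The strong product $G\boxtimes H$ has vertex set $V(G)\times V(H)$ with $(v,w)\sim(v',w')$ if ($v=v'$ and $ww'\in E(H)$) or ($w=w'$ and $vv'\in E(G)$) or ($vv'\in E(G)$ and $ww'\in E(H)$). Pathwidth is the usual parameter (minimum over path-decompositions of the maximum bag size minus one). *)

(* Defs.v *)
From mathcomp Require Import all_boot.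
Set Implicit Arguments. Unset Strict Implicit. Unset Printing Implicit Defensive.

Record sgraph := SGraph {
  vert :> finType;
  adj : rel vert;
  adj_sym : symmetric adj;
  adj_irr : irreflexive adj }.

Definition subgraph_iso (G H : sgraph) : Prop :=
  exists f : G -> H, injective f /\ forall x y : G, adj x y -> adj (f x) (f y).

Definition path_decomposition (G : sgraph) (B : seq {set G}) : Prop :=
  [/\ forall v : G, exists2 X, X \in B & v \in X,
      forall u v : G, adj u v -> exists2 X, X \in B & (u \in X) && (v \in X)
    & forall (v : G) (i j l : nat), i <= j -> j <= l -> l < size B ->
        v \in nth set0 B i -> v \in nth set0 B l -> v \in nth set0 B j].

Definition pathwidth_le (G : sgraph) (w : nat) : Prop :=
  exists B : seq {set G}, @path_decomposition G B /\ forall X, X \in B -> #|X| <= w.+1.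

Definition path_adj n : rel 'I_n := fun i j => (i.+1 == j :> nat) || (j.+1 == i :> nat).
Lemma path_sym n : symmetric (@path_adj n).
Proof. by move=> i j; rewrite /path_adj orbC. Qed.
Lemma path_irr n : irreflexive (@path_adj n).
Proof. by move=> i; rewrite /path_adj orbb; apply/negP => /eqP/esym/n_Sn. Qed.
Definition Pn (n : nat) : sgraph := SGraph (@path_sym n) (@path_irr n).

Definition complete_adj m : rel 'I_m := fun i j => i != j.
Lemma complete_sym m : symmetric (@complete_adj m).
Proof. by move=> i j; rewrite /complete_adj eq_sym. Qed.
Lemma complete_irr m : irreflexive (@complete_adj m).
Proof. by move=> i; rewrite /complete_adj eqxx. Qed.
Definition Km (m : nat) : sgraph := SGraph (@complete_sym m) (@complete_irr m).

Definition strong_adj (G H : sgraph) : rel (G * H)%type :=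
  fun p q => [|| (p.1 == q.1) && adj p.2 q.2,
                 adj p.1 q.1 && (p.2 == q.2)
               | adj p.1 q.1 && adj p.2 q.2].
Lemma strong_sym G H : symmetric (@strong_adj G H).
Proof.
by move=> p q; rewrite /strong_adj (eq_sym p.1) (eq_sym p.2) (adj_sym p.1) (adj_sym p.2).
Qed.
Lemma strong_irr G H : irreflexive (@strong_adj G H).
Proof. by move=> p; rewrite /strong_adj !adj_irr !andbF andFb. Qed.
Definition strong (G H : sgraph) : sgraph := SGraph (@strong_sym G H) (@strong_irr G H).

Definition join_adj (G H : sgraph) : rel (G + H)%type :=
  fun p q => match p, q with
             | inl x, inl y => adj x y
             | inr x, inr y => adj x y
             | _, _ => true end.
Lemma join_sym G H : symmetric (@join_adj G H).
Proof. by case=> x [] y //=; rewrite adj_sym. Qed.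
Lemma join_irr G H : irreflexive (@join_adj G H).
Proof. by case=> x /=; rewrite adj_irr. Qed.
Definition join (G H : sgraph) : sgraph := SGraph (@join_sym G H) (@join_irr G H).

(* Main.v *)
Require Import Defs.
From mathcomp Require Import all_boot.
From mathcomp Require Import zify.
Set Implicit Arguments. Unset Strict Implicit. Unset Printing Implicit Defensive.

Fixpoint gsz (L n : nat) : nat := if n is n'.+1 then L * (gsz L n' + 1) else 0.
Definition wrel (H : sgraph) : rel H := fun a b => (a == b) || adj a b.

Lemma split_first (T : eqType) (x : T) s : x \in s ->
  exists s1 s2, s = s1 ++ x :: s2 /\ x \notin s1.
Proof.
elim: s => //= y s IH; rewrite in_cons; case: (eqVneq x y) => [<-|nxy] /= H.
  by exists [::], s.
have [s1 [s2 [-> H2]]] := IH H.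
by exists (y :: s1), s2; split => //; rewrite in_cons negb_or nxy.
Qed.

Definition walk_res (H : sgraph) n (x : H) (s : seq H) :=
  exists p, [/\ size p = n, uniq (x :: p), path (@adj H) x p & all (mem (x :: s)) p].

Lemma walk_res_mono (H : sgraph) n (x : H) s s' :
  {subset s <= s'} -> walk_res n x s -> walk_res n x s'.
Proof.
move=> sub [p [h1 h2 h3 h4]]; exists p; split => //.
apply/allP => z /(allP h4); rewrite /= !inE => /orP [->//|/sub ->]; by rewrite orbT.
Qed.

Lemma walk_path (H : sgraph) L n : forall (x : H) s, path (@wrel H) x s ->
  (forall u, count_mem u (x :: s) <= L) -> gsz L n <= size s -> walk_res n x s.
Proof.
elim: n => [|n IH] x s.
  by move=> _ _ _; exists [::].
have case1 : forall s, x \notin s -> gsz L n + 1 <= size s -> path (@wrel H) x s ->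
    (forall u, count_mem u (x :: s) <= L) -> walk_res n.+1 x s.
  case=> [|y s'] xn sz; first by rewrite addn1 in sz.
  move=> /= /andP [wxy ps] cnt.
  have [p [h1 h2 h3 h4]] : walk_res n y s'.
    apply: IH => //; last by move: sz => /=; lia.
    move=> u; apply: leq_trans (cnt u); exact: leq_addl.
  exists (y :: p); split => //=.
  - by rewrite h1.
  - move: h2 => /= ->; rewrite andbT; apply/negP => xyp.
    have : x \in y :: s'.
      move: xyp; rewrite in_cons => /orP [/eqP ->|/(allP h4)] //.
      by rewrite in_cons eqxx.
    by rewrite (negbTE xn).
  - rewrite h3 andbT; move: wxy; rewrite /wrel; case: eqP => // exy.
    by move: xn; rewrite exy in_cons eqxx.
  - rewrite !in_cons eqxx !orbT /=; apply/allP => z /(allP h4).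
    by rewrite /= !inE => ->; rewrite !orbT.
have T : forall c s, count_mem x s <= c -> c.+1 * (gsz L n + 1) <= size s ->
    path (@wrel H) x s -> (forall u, count_mem u (x :: s) <= L) -> walk_res n.+1 x s.
  elim=> [|c IHc] s0 cs sz ps cnt.
    apply: case1 => //; last by move: sz; rewrite mul1n.
    by rewrite -has_pred1 has_count; move: cs; rewrite leqn0 => /eqP ->.
  case: (boolP (x \in s0)) => xs; last first.
    apply: case1 => //; apply: leq_trans sz; exact: leq_pmull.
  have [s1 [s2 [e xn]]] := split_first xs.
  move: ps; rewrite e cat_path /= => /andP [ps1 /andP [_ ps2]].
  case: (leqP (gsz L n + 1) (size s1)) => hs1.
    apply: (walk_res_mono (s := s1)); first by move=> z zs; rewrite mem_cat zs.
    apply: case1 => // u; apply: leq_trans (cnt u); rewrite e /= count_cat.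
    by rewrite leq_add2l leq_addr.
  apply: (walk_res_mono (s := s2)).
    by move=> z zs; rewrite mem_cat in_cons zs !orbT.
  apply: IHc => //.
  - move: cs; rewrite e count_cat /= eqxx. 
    lia.
  - move: sz; rewrite e size_cat /= mulSn.
    move: hs1 (c.+1 * (gsz L n + 1)) => hs1 X.
    move: (gsz L n) hs1 => g; move: (size s1) (size s2) => a b; lia.
  - move=> u; apply: leq_trans (cnt u); rewrite e /= count_cat /=.
    lia.
move=> ps cnt sz.
have L1 : 0 < L by apply: leq_trans (cnt x); rewrite /= eqxx.
apply: (T L.-1) => //.
- by move: (cnt x); rewrite /= eqxx add1n; lia.
- by rewrite prednK.
Qed.

Section G.
Variables (k M N' : nat).
Hypothesis (M0 : 0 < M) (N0 : 0 < N').

Definition apexT := {x : 'I_k * 'I_(M ^ k) | x.2 < M ^ x.1}.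
Definition VT := (apexT + ('I_(M ^ k) * 'I_N'.+1))%type.
Definition lv (v : VT) : nat := match v with inl a => (val a).1 | inr _ => k end.
Definition ix (v : VT) : nat := match v with inl a => (val a).2 | inr p => p.1 end.

Definition gadj : rel VT := fun v w => match v, w with
 | inr p, inr p' => (p.1 == p'.1) && ((p.2.+1 == p'.2 :> nat) || (p'.2.+1 == p.2 :> nat))
 | _, _ => ((lv v < lv w) && (ix w %/ M ^ (lv w - lv v) == ix v))
        || ((lv w < lv v) && (ix v %/ M ^ (lv v - lv w) == ix w)) end.

Lemma gadj_sym : symmetric gadj.
Proof. by move=> [a|p] [b|q] /=; rewrite orbC // eq_sym orbC. Qed.
Lemma gadj_irr : irreflexive gadj.
Proof. by move=> [a|p] /=; rewrite ?ltnn // eqxx /= eqn_leq ltnn. Qed.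
Definition Gk : sgraph := SGraph gadj_sym gadj_irr.

Lemma lv_le (v : VT) : lv v <= k.
Proof. by case: v => [a|p] //=; apply: ltnW. Qed.
Lemma lv_apex (v : VT) : lv v < k -> exists a, v = inl a.
Proof. by case: v => [a|p] /=; [exists a | rewrite ltnn]. Qed.
Lemma ix_lt (v : VT) : ix v < M ^ lv v.
Proof. by case: v => [a|p] /=; [exact: (valP a) | ]. Qed.

Definition inbag (j : nat) (v : VT) : bool := match v with
 | inl a => ix v == j %/ N' %/ M ^ (k - lv v)
 | inr p => (p.1 == j %/ N' :> nat) && ((p.2 == j %% N' :> nat) || (p.2 == (j %% N').+1 :> nat)) end.
Definition bag j : {set Gk} := [set v | inbag j v].
Definition Bs := mkseq bag (M ^ k * N').

Lemma nth_Bs j : j < M ^ k * N' -> nth set0 Bs j = bag j.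
Proof. by move=> h; rewrite nth_mkseq. Qed.
Lemma bag_in j : j < M ^ k * N' -> bag j \in Bs.
Proof. by move=> h; apply: map_f; rewrite mem_iota. Qed.
Lemma Bs_in X : X \in Bs -> exists2 j, j < M ^ k * N' & X = bag j.
Proof. by case/mapP => j; rewrite mem_iota add0n => h ->; exists j. Qed.

Lemma divmod t r : r < N' -> (t * N' + r) %/ N' = t /\ (t * N' + r) %% N' = r.
Proof. by move=> h; rewrite divnMDl // modnMDl divn_small // modn_small // addn0. Qed.
Lemma lt_idx t r T : t < T -> r < N' -> t * N' + r < T * N'.
Proof. move=> h1 h2; apply: (@leq_trans (t.+1 * N')); first by rewrite mulSn; lia.
by rewrite leq_mul2r h1 orbT. Qed.

Lemma bag_cover (w : VT) : exists2 j, j < M ^ k * N' &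
  inbag j w && (j %/ N' %/ M ^ (k - lv w) == ix w).
Proof.
case: w => [a|[t i]] /=.
  have hq : (val a).2 < M ^ (val a).1 := valP a.
  have hd : (val a).1 <= k by apply: ltnW.
  move: ((val a).1 : nat) ((val a).2 : nat) hd hq => d q hd hq.
  exists (q * M ^ (k - d) * N').
    rewrite -[X in X < _]addn0; apply: lt_idx => //.
    by rewrite -(subnKC hd) addKn expnD ltn_pmul2r // expn_gt0 M0.
  by rewrite mulnK // mulnK ?expn_gt0 ?M0 // eqxx.
have ht : t < M ^ k by [].
case: (ltnP i N') => hi.
  exists (t * N' + i); first exact: lt_idx.
  by case: (divmod t hi) => -> ->; rewrite subnn expn0 divn1 !eqxx.
have ei : (i : nat) = N' by apply/eqP; rewrite eqn_leq hi -ltnS ltn_ord.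
have hN : N'.-1 < N' by rewrite prednK.
exists (t * N' + N'.-1); first exact: lt_idx.
by case: (divmod t hN) => -> ->; rewrite subnn expn0 divn1 !eqxx ei prednK // eqxx orbT.
Qed.

Lemma card_bag j : #|bag j| <= k.+2.
Proof.
pose f (v : VT) : 'I_k.+2 := inord (match v with inl a => lv v | inr p => k + (p.2 - j %% N') end).
have lt2 : forall x : 'I_k, (x : nat) < k.+2 by move=> x; have := ltn_ord x; lia.
rewrite -[k.+2]card_ord; apply: (@leq_card_in _ _ f) => v w.
rewrite /bag !inE /f.
case: v => [a|[t i]]; case: w => [b|[t' i']] /= hv hw /(congr1 (@nat_of_ord _)).
- rewrite !inordK ?lt2 // => e.
  case: a b hv hw e => [[d q] hq] [[d' q'] hq'] /= /eqP h1 /eqP h2 e.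
  have ed : d = d' by apply: val_inj.
  subst d'; congr inl; apply: val_inj => /=; congr pair; apply: val_inj.
  by rewrite /= h1 h2.
- rewrite !inordK; first by move=> e; have := ltn_ord (val a).1; rewrite e; lia.
    move: hw => /andP [_ /orP [] /eqP ->]; lia.
  exact: lt2.
- rewrite !inordK; first by move=> e; have := ltn_ord (val b).1; rewrite -e; lia.
    exact: lt2.
  move: hv => /andP [_ /orP [] /eqP ->]; lia.
- move: hv hw => /andP [/eqP h1 h2] /andP [/eqP h1' h2'].
  have hi : (i:nat) = j %% N' \/ (i:nat) = (j %% N').+1 by case/orP: h2 => /eqP; auto.
  have hi' : (i':nat) = j %% N' \/ (i':nat) = (j %% N').+1 by case/orP: h2' => /eqP; auto.
  rewrite !inordK; try lia.
  move=> e; have ei : (i : nat) = i' by lia.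
  have et : t = t' by apply: val_inj; rewrite /= h1 h1'.
  subst t'.
  by congr inr; congr pair; apply: val_inj.
Qed.

Lemma edge_cover (u w : Gk) : (lv u < lv w) && (ix w %/ M ^ (lv w - lv u) == ix u) ->
  exists2 X, X \in Bs & (u \in X) && (w \in X).
Proof.
move=> /andP [hl /eqP he].
have [j hj /andP [hw /eqP e]] := bag_cover w.
have hk := lv_le w.
have [a ea] := lv_apex (leq_trans hl hk).
exists (bag j); first exact: bag_in.
rewrite !inE hw andbT.
suff : ix u == j %/ N' %/ M ^ (k - lv u) by rewrite ea.
have -> : k - lv u = (k - lv w) + (lv w - lv u) by lia.
by rewrite expnD divnMA e he.
Qed.

Lemma path_edge t (i i' : 'I_N'.+1) : i.+1 == i' :> nat ->
  exists2 X, X \in Bs & (inr (t, i) \in X) && (inr (t, i') \in (X : {set Gk})).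
Proof.
move=> /eqP e.
have hi : (i : nat) < N' by rewrite -ltnS e ltn_ord.
exists (bag (t * N' + i)); first exact: bag_in (lt_idx (ltn_ord t) hi).
rewrite !inE /= !(proj1 (divmod t hi)) !(proj2 (divmod t hi)) -e !eqxx.
by rewrite orbT.
Qed.

Lemma pw : pathwidth_le Gk k.+1.
Proof.
exists Bs; split; last by move=> X /Bs_in [j _ ->]; exact: card_bag.
split.
- move=> v; have [j hj /andP [h _]] := bag_cover v.
  by exists (bag j); [exact: bag_in | rewrite inE].
- move=> u v huv.
  case: (boolP ((lv u < lv v) && (ix v %/ M ^ (lv v - lv u) == ix u))) => [h|n1].
    exact: edge_cover h.
  case: (boolP ((lv v < lv u) && (ix u %/ M ^ (lv u - lv v) == ix v))) => [h|n2].
    by have [X h1 h2] := edge_cover h; exists X => //; rewrite andbC.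
  move: huv n1 n2; case: u => [a|[t i]]; case: v => [b|[t' i']] /=;
    try by move=> /orP [->|->].
  case/andP => /eqP et; subst t'; case/orP => h _ _; first exact: path_edge.
  by have [X h1 h2] := path_edge t h; exists X => //; rewrite andbC.
- move=> v i j l hij hjl hl.
  rewrite /Bs size_mkseq in hl.
  move: (M ^ k * N') hl (@nth_Bs i) (@nth_Bs j) (@nth_Bs l) => S hl ni nj nl.
  rewrite ni ?nj ?nl; try lia.
  rewrite !inE; case: v => [a|[t x]] /=.
    move=> /eqP h1 /eqP h2; apply/eqP; apply/eqP; rewrite eqn_leq; apply/andP; split.
      by rewrite h1; apply: leq_div2r; apply: leq_div2r.
    by rewrite h2; apply: leq_div2r; apply: leq_div2r.
  move=> /andP [/eqP a1 b1] /andP [/eqP a2 b2].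
  have qj : j %/ N' = t.
    apply/eqP; rewrite eqn_leq; apply/andP; split.
      by rewrite a2; apply: leq_div2r.
    by rewrite a1; apply: leq_div2r.
  rewrite qj eqxx /=.
  have ei := divn_eq i N'; have ej := divn_eq j N'; have el := divn_eq l N'.
  rewrite -a1 in ei; rewrite qj in ej; rewrite -a2 in el.
  have hb1 : (x : nat) = i %% N' \/ (x : nat) = (i %% N').+1 by case/orP: b1 => /eqP; auto.
  have hb2 : (x : nat) = l %% N' \/ (x : nat) = (l %% N').+1 by case/orP: b2 => /eqP; auto.
  move: (t * N') ei ej el => T ei ej el.
  have : (x : nat) = j %% N' \/ (x : nat) = (j %% N').+1 by lia.
  by case=> ->; rewrite eqxx ?orbT.
Qed.

End G.

Lemma cnt_card (T : finType) (P : pred T) : count P (enum T) = #|[pred i | P i]|.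
Proof. by rewrite cardE -size_filter /enum_mem filter_predT. Qed.

Lemma strong_proj (G1 G2 : sgraph) (p q : strong G1 G2) : adj p q ->
  ((p.1 == q.1) || adj p.1 q.1) && ((p.2 == q.2) || adj p.2 q.2).
Proof.
rewrite /= /strong_adj.
by case/or3P => /andP [h1 h2]; rewrite ?h1 ?h2 ?orbT.
Qed.

Section F.
Variables (k l n' : nat) (H : sgraph) (m : nat).
Hypothesis (hk : 0 < k) (hl : 0 < l).
Let M := (3 * l).+1.
Let N' := (gsz (3 * l) n').+1.
Let GG := Gk k M N'.
Variable f : GG -> strong (strong H (Pn m)) (Km l).
Hypothesis (finj : injective f) (fhom : forall x y, adj x y -> adj (f x) (f y)).

Definition hH (v : GG) : H := (f v).1.1.
Definition pP (v : GG) : nat := (f v).1.2.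

Lemma proj u v : adj u v -> ((hH u == hH v) || adj (hH u) (hH v)) &&
  [|| pP u == pP v, (pP u).+1 == pP v | (pP v).+1 == pP u].
Proof.
move=> /fhom /strong_proj /andP [/orP [/eqP e| /strong_proj /andP [h1 h2]] _].
  by rewrite /hH /pP e !eqxx.
apply/andP; split; first exact: h1.
move: h2; rewrite /pP; case/orP => [/eqP -> | ]; first by rewrite eqxx.
by rewrite /= /path_adj => ->; rewrite orbT.
Qed.

Lemma M0 : 0 < M. Proof. by []. Qed.

Lemma Mk_gt0 : 0 < M ^ k. Proof. by rewrite expn_gt0. Qed.
Definition root : GG := inl (exist _ (Ordinal hk, Ordinal Mk_gt0) (erefl true)).

Lemma root_adj v : v = root \/ adj root v.
Proof.
case: (posnP (lv v)) => h.
  left; case: v h => [[[d q] hq] /= hd|p /= hk0]; last by exfalso; move: hk; rewrite hk0.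
  rewrite /root; congr inl; apply: val_inj => /=.
  move: hq; rewrite /= hd expn0 ltnS leqn0 => /eqP hq0.
  by congr pair; apply: val_inj.
right; rewrite /= /gadj; case: v h => [a|p] /= h; rewrite h /= subn0 divn_small ?eqxx //.
  exact: (valP a).
Qed.

Lemma near v : pP root <= (pP v).+1 /\ pP v <= (pP root).+1.
Proof.
case: (root_adj v) => [->|/proj /andP [_]]; first by split; apply: leqW.
by case/or3P => /eqP <-; split; lia.
Qed.

Definition gmap (v : GG) : 'I_3 * 'I_l := (inord ((pP v).+1 - pP root), (f v).2).

Lemma ginj v w : hH v = hH w -> gmap v = gmap w -> v = w.
Proof.
move=> eh [] /(congr1 (@nat_of_ord _)) e2 e3.
have [a1 a2] := near v; have [b1 b2] := near w.
rewrite !inordK in e2; try lia.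
have ep : pP v = pP w by lia.
apply: finj; move: eh e3 ep; rewrite /hH /pP.
case: (f v) => [[x y] z]; case: (f w) => [[x' y'] z'] /= -> -> ep.
by congr pair; congr pair; apply: val_inj.
Qed.
Definition in_sub d q (v : GG) := (d <= lv v) && (ix v %/ M ^ (lv v - d) == q).

Lemma sub_parent d q j v : j < M -> in_sub d.+1 (q * M + j) v -> in_sub d q v.
Proof.
move=> hj /andP [h1 /eqP h2]; rewrite /in_sub ltnW //=.
have -> : lv v - d = (lv v - d.+1).+1 by lia.
by rewrite expnSr divnMA h2 divnMDl // divn_small // addn0.
Qed.

Lemma choose_child d q u : exists2 j, j < M & forall v, in_sub d.+1 (q * M + j) v -> hH v != u.
Proof.
pose C := [set j : 'I_M | [exists v, in_sub d.+1 (q * M + j) v && (hH v == u)]].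
pose w (j : 'I_M) : GG := odflt root [pick v | in_sub d.+1 (q * M + j) v && (hH v == u)].
have wP : forall j, j \in C -> in_sub d.+1 (q * M + j) (w j) && (hH (w j) == u).
  move=> j; rewrite inE /w; case: pickP => [v -> //| h /existsP [v]]; by rewrite h.
have cC : #|C| <= 3 * l.
  have <- : #|{: 'I_3 * 'I_l}| = 3 * l by rewrite card_prod !card_ord.
  apply: (@leq_card_in _ _ (fun j => gmap (w j))) => j1 j2 h1 h2 e.
  have /andP [s1 /eqP u1] := wP _ h1; have /andP [s2 /eqP u2] := wP _ h2.
  have ew := ginj (etrans u1 (esym u2)) e.
  apply: val_inj; move: s1 s2 => /andP [_ /eqP e1] /andP [_ /eqP e2].
  rewrite ew in e1; exact: (addnI (etrans (esym e1) e2)).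
case: (pickP (fun j => j \notin C)) => [j hj | h].
  exists j => // v hv; apply/negP => /eqP hu.
  move/negP: hj; apply; rewrite inE; apply/existsP; exists v; by rewrite hv hu eqxx.
have : #|[set: 'I_M]| <= #|C|.
  apply: subset_leq_card; apply/subsetP => j _.
  by move: (h j) => /= /negbT; rewrite negbK.
rewrite cardsT card_ord => hc; exfalso; move: hc cC; rewrite /M; lia.
Qed.

Lemma adj_apex (a : apexT k M) (v : GG) : lv (inl a : GG) < lv v ->
  ix v %/ M ^ (lv v - lv (inl a : GG)) == ix (inl a : GG) -> adj (inl a : GG) v.
Proof. by case: v => [b|p] /= h1 h2; rewrite /gadj /= h1 h2. Qed.

Definition Inv d q (A : seq H) := [/\ q < M ^ d, size A = d, uniq A,
  (forall x y, x \in A -> y \in A -> x != y -> adj x y) &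
  (forall v, in_sub d q v -> hH v \notin A /\ forall x, x \in A -> adj x (hH v))].

Lemma greedy d : d <= k -> exists q A, Inv d q A.
Proof.
elim: d => [|d IH] hd.
  by exists 0, [::]; split.
have [q [A [hq hs hu hp hv]]] := IH (ltnW hd).
have hqk : q < M ^ k by apply: leq_trans hq _; rewrite leq_pexp2l // ltnW.
pose ad : GG := inl (exist _ (Ordinal hd, Ordinal hqk) hq).
have sad : in_sub d q ad by rewrite /in_sub /= leqnn subnn expn0 divn1 eqxx.
have [xn xadj] := hv _ sad.
have [j hj hch] := choose_child d q (hH ad).
exists (q * M + j), (hH ad :: A); split.
- rewrite expnSr; apply: (@leq_trans (q.+1 * M)); first by rewrite mulSn; lia.
  by rewrite leq_mul2r hq orbT.
- by rewrite /= hs.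
- by rewrite /= xn hu.
- move=> x y; rewrite !in_cons => /orP [/eqP ->|xA] /orP [/eqP ->|yA]; rewrite ?eqxx // => nxy.
  + by rewrite adj_sym; apply: xadj.
  + exact: xadj.
  + exact: hp.
- move=> v hsub; have hs0 := sub_parent hj hsub; have [n1 n2] := hv _ hs0.
  have ne := hch _ hsub.
  have aadj : adj ad v.
    move: hsub hs0 => /andP [h1 _] /andP [_ h2]; exact: adj_apex.
  split; first by rewrite in_cons negb_or ne n1.
  move=> x; rewrite in_cons => /orP [/eqP ->|xA]; last exact: n2.
  by move: (proj aadj) => /andP [/orP [/eqP e|//] _]; move: ne; rewrite e eqxx.
Qed.

Lemma final : subgraph_iso (join (Pn n'.+1) (Km k)) H.
Proof.
have [q [A [hq hs hu hp hv]]] := greedy (leqnn k).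
pose t : 'I_(M ^ k) := Ordinal hq.
pose pv (i : 'I_N'.+1) : GG := inr (t, i).
have spv i : in_sub k q (pv i) by rewrite /in_sub /= leqnn subnn expn0 divn1 eqxx.
pose w (i : nat) : H := hH (pv (inord i)).
have hw : forall i, i < N' -> @wrel H (w i) (w i.+1).
  move=> i hi.
  have e : adj (pv (inord i)) (pv (inord i.+1)).
    by rewrite /= /gadj /= eqxx /= !inordK ?eqxx //; lia.
  by have /andP [h _] := proj e.
have pw : forall a b, a + b <= N' -> path (@wrel H) (w a) (map w (iota a.+1 b)).
  move=> a b; elim: b a => [|b IHb] a hab //=.
  rewrite hw ?IHb //; lia.
pose x0 := w 0; pose s := map w (iota 1 N').
have cnt : forall u, count_mem u (x0 :: s) <= 3 * l.
  move=> u; have -> : x0 :: s = map w (iota 0 N'.+1) by [].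
  rewrite count_map -val_enum_ord count_map cnt_card.
  have <- : #|{: 'I_3 * 'I_l}| = 3 * l by rewrite card_prod !card_ord.
  apply: (@leq_card_in _ _ (fun i => gmap (pv i))) => i1 i2.
  rewrite !inE /= /w !inord_val => /eqP u1 /eqP u2 e.
  have := ginj (etrans u1 (esym u2)) e; rewrite /pv => -[].
  exact.
have sz : gsz (3 * l) n' <= size s by rewrite /s size_map size_iota.
have [p [h1 h2 h3 h4]] := walk_path (pw 0 N' (leqnn _)) cnt sz.
pose P := x0 :: p.
have inP : forall z, z \in P -> z \notin A /\ forall x, x \in A -> adj x z.
  move=> z hz.
  have : z \in map w (iota 0 N'.+1).
    move: hz; rewrite /P in_cons => /orP [/eqP ->|/(allP h4) //].
    by rewrite in_cons eqxx.
  by case/mapP => i _ ->; apply: hv.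
have sP : size P = n'.+1 by rewrite /= h1.
have oP : forall i : 'I_n'.+1, (i : nat) < size P by move=> i; rewrite sP.
have consec : forall a, a.+1 < size P -> adj (nth x0 P a) (nth x0 P a.+1).
  move=> a ha; exact: (pathP x0 h3).
pose F (z : join (Pn n'.+1) (Km k)) : H :=
  match z with inl i => nth x0 P i | inr e => nth x0 A e end.
exists F; split.
- move=> [i|e] [i'|e'] /=.
  + move/eqP; rewrite nth_uniq ?sP ?ltn_ord // => /eqP e.
    by congr inl; apply: val_inj.
  + move=> e1; have [nA _] := inP _ (mem_nth x0 (oP i)).
    by move: nA; rewrite e1 mem_nth // hs.
  + move=> e1; have [nA _] := inP _ (mem_nth x0 (oP i')).
    by move: nA; rewrite -e1 mem_nth // hs.
  + move/eqP; rewrite nth_uniq ?hs ?ltn_ord // => /eqP e1.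
    by congr inr; apply: val_inj.
- move=> [i|e] [i'|e'] /=.
  + rewrite /path_adj => /orP [/eqP e|/eqP e].
      by have := oP i'; rewrite -e => hi; apply: consec.
    by have := oP i; rewrite -e adj_sym => hi; apply: consec.
  + move=> _; have [_ hA] := inP _ (mem_nth x0 (oP i)).
    by rewrite adj_sym; apply: hA; rewrite mem_nth // hs.
  + move=> _; have [_ hA] := inP _ (mem_nth x0 (oP i')).
    by apply: hA; rewrite mem_nth // hs.
  + rewrite /complete_adj => ne; apply: hp; rewrite ?mem_nth ?hs //.
    by rewrite nth_uniq ?hs.
Qed.

End F.

Theorem proposition10 (k l n : nat) (hk : 0 < k) (hl : 0 < l) (hn : 0 < n) :
  exists G : sgraph,
    pathwidth_le G k.+1 /\
    forall (H : sgraph) (m : nat),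
      subgraph_iso G (strong (strong H (Pn m)) (Km l)) ->
      subgraph_iso (join (Pn n) (Km k)) H.
Proof.
exists (Gk k (3 * l).+1 (gsz (3 * l) n.-1).+1); split; first exact: pw.
move=> H m [f [fi fh]].
rewrite -[n in Pn n](prednK hn).
exact: (final hk hl fi fh).
Qed.
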